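(* Let $r \in \mathbb{Q}_{>0}$ be such that $S_r$ is atomic. Then for every $k \in \mathbb{N}$, $\mathcal{U}_k(S_r)$ is an arithmetic progression containing $k$ with difference $|\mathsf{n}(r) - \mathsf{d}(r)|$. More precisely: (1) If $r < 1$, then $\mathcal{U}_k(S_r) = \{k\}$ if $k < \mathsf{n}(r)$; $\mathcal{U}_k(S_r) = \{k + j(\mathsf{d}(r) - \mathsf{n}(r)) : j \in \mathbb{N}_0\}$ if $\mathsf{n}(r) \le k < \mathsf{d}(r)$; and $\mathcal{U}_k(S_r) = \{k + j(\mathsf{d}(r) - \mathsf{n}(r)) : j \in \mathbb{Z}, j \ge \ell\}$ for some negative integer $\ell$ if $k \ge \mathsf{d}(r)$. (2) If $r \in \mathbb{Q}_{>1} \setminus \mathbb{N}$, then $\mathcal{U}_k(S_r) = \{k\}$ if $k < \mathsf{d}(r)$; $\mathcal{U}_k(S_r) = \{k + j(\mathsf{n}(r) - \mathsf{d}(r)) : j \in \mathbb{N}_0\}$ if $\mathsf{d}(r) \le k < \mathsf{n}(r)$; and $\mathcal{U}_k(S_r) = \{k + j(\mathsf{n}(r) - \mathsf{d}(r)) : j \in \mathbb{Z}, j \ge \ell\}$ for some negative integer $\ell$ if $k \ge \mathsf{n}(r)$. (3) If $r \in \mathbb{N}$, then $\mathcal{U}_k(S_r) = \{k\}$ for every $k \in \mathbb{N}$.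
   Context: For $q \in \mathbb{Q}_{>0}$, $\mathsf{n}(q),\mathsf{d}(q)$ are the positive coprime integers with $q = \mathsf{n}(q)/\mathsf{d}(q)$. $S_r$ is the additive submonoid of $(\mathbb{Q}_{\ge 0},+)$ generated by $\{r^n : n \in \mathbb{N}_0\}$; it is atomic exactly when $r=1$ or $\mathsf{n}(r)>1$ (then for $r \notin \mathbb{N}$ its atoms are the $r^n$, $n\in\mathbb{N}_0$; for $r \in \mathbb{N}$, $S_r=\mathbb{N}_0$). $\mathsf{L}(x)$ denotes the set of lengths of factorizations of $x$ into atoms. For $k \in \mathbb{N}$, $\mathcal{U}_k(S_r)$ is the set of $\ell \in \mathbb{N}$ for which there exist atoms $a_1,\dots,a_k,b_1,\dots,b_\ell$ with $a_1+\dots+a_k = b_1 + \dots + b_\ell$; equivalently, the union of all sets $\mathsf{L}(x)$, $x \in S_r$, containing $k$. *)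

(* Defs.v *)
From HB Require Import structures.
From mathcomp Require Import all_boot all_order all_algebra.
Set Implicit Arguments. Unset Strict Implicit. Unset Printing Implicit Defensive.
Import Order.TTheory GRing.Theory Num.Theory.
Local Open Scope ring_scope.

Definition in_Sr (r x : rat) : Prop :=
  exists s : seq nat, x = \sum_(i <- s) r ^+ i.

Definition atom_Sr (r a : rat) : Prop :=
  [/\ in_Sr r a, a != 0 &
      forall b c, in_Sr r b -> in_Sr r c -> a = b + c -> b = 0 \/ c = 0].

Definition atomic_Sr (r : rat) : Prop :=
  forall x, in_Sr r x -> x != 0 ->
    exists s : seq rat, (forall a, a \in s -> atom_Sr r a) /\ x = \sum_(a <- s) a.

Definition U_Sr (r : rat) (k l : nat) : Prop :=
  (0 < l)%N /\
  exists as_ bs : seq rat,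
    [/\ size as_ = k, size bs = l,
        (forall a, a \in as_ -> atom_Sr r a),
        (forall b, b \in bs -> atom_Sr r b) &
        \sum_(a <- as_) a = \sum_(b <- bs) b].

(* Main.v *)
Require Import Defs.
From HB Require Import structures.
From mathcomp Require Import all_boot all_order all_algebra.
From mathcomp Require Import zify ring lra.
From Stdlib Require Import Classical_Prop.
Set Implicit Arguments. Unset Strict Implicit. Unset Printing Implicit Defensive.
Import Order.TTheory GRing.Theory Num.Theory.
Local Open Scope ring_scope.



Lemma mem_sumn (x : nat) s : x \in s -> (x <= sumn s)%N.
Proof.
elim: s => //= y s IH; rewrite in_cons => /orP [/eqP ->|/IH]; lia.
Qed.

Lemma sum_count (R : nzRingType) (F : nat -> R) M s : all (fun x => x < M)%N s ->
  \sum_(i < M) (count_mem (i : nat) s)%:R * F i = \sum_(x <- s) F x.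
Proof.
elim: s => [|x s IH] /=.
  by move=> _; rewrite big_nil big1 // => i _; rewrite mul0r.
move=> /andP [Hx Hs]; rewrite big_cons -IH //.
transitivity (\sum_(i < M) ((x == i)%:R * F i + (count_mem (i:nat) s)%:R * F i)).
  by apply: eq_bigr => i _; rewrite natrD mulrDl.
rewrite big_split /=; congr (_ + _).
rewrite (bigD1 (Ordinal Hx)) //= eqxx mul1r big1 ?addr0 // => i Hi.
have -> : (x == i) = false.
  apply/negP => /eqP Hxi; move: Hi; rewrite -val_eqE /= Hxi eqxx //.
by rewrite mul0r.
Qed.
Section Key.
Variables (n d : nat).
Hypotheses (n0 : (0 < n)%N) (d0 : (0 < d)%N) (cnd : coprime n d).

Fixpoint Tz (e : seq int) : int :=
  if e is a :: e' then a * (d%:Z) ^+ (size e').+1 + n%:Z * Tz e' else 0.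

Fixpoint Rel (qp : int) (e : seq int) : Prop :=
  if e is a :: e' then exists qi, a = d%:Z * qp - n%:Z * qi /\ Rel qi e' else qp = 0.

Lemma key e qp : Tz e = qp * (d%:Z) ^+ (size e).+1 -> Rel qp e.
Proof.
elim: e qp => [|a e IH] qp /=.
  rewrite expr1 => H; nia.
move=> H.
have H1 : n%:Z * Tz e = (qp * d%:Z - a) * (d%:Z) ^+ (size e).+1.
  by rewrite mulrBl -mulrA -exprS -H; ring.
set D := (d%:Z) ^+ (size e).+1 in H1 *.
have Hdv : (n%:Z %| (qp * d%:Z - a))%Z.
  rewrite -(@Gauss_dvdzl _ _ D); last first.
    by apply: coprimezXr; rewrite coprimezE.
  by rewrite -H1 dvdz_mulr.
exists ((qp * d%:Z - a) %/ n%:Z)%Z; split.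
  have := divzK Hdv; lia.
apply: IH; apply: (@mulfI _ n%:Z); first by rewrite eqz_nat -lt0n.
by rewrite H1 -{1}(divzK Hdv) /D; ring.
Qed.

Lemma RelQ_pos qp e : Rel qp e -> 0 <= qp -> (forall i, nth 0 e i < n%:Z) ->
  exists Q, 0 <= Q /\ \sum_(a <- e) a = d%:Z * qp + (d%:Z - n%:Z) * Q.
Proof.
elim: e qp => [|a e IH] qp /=.
  by move=> -> _ _; exists 0; rewrite big_nil; split => //; ring.
move=> [qi [Ha HR]] Hq Hn.
have Hqi : 0 <= qi.
  have := Hn 0%N; rewrite /= Ha => H; nia.
have [Q [HQ HS]] := IH qi HR Hqi (fun i => Hn i.+1).
exists (qi + Q); split; first lia.
rewrite big_cons HS Ha; ring.
Qed.

Lemma RelQ_neg qp e : Rel qp e -> (forall i, nth 0 e i < d%:Z) ->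
  qp <= 0 /\ exists Q, Q <= 0 /\ \sum_(a <- e) a = d%:Z * qp + (d%:Z - n%:Z) * Q.
Proof.
elim: e qp => [|a e IH] qp /=.
  by move=> -> _; split => //; exists 0; rewrite big_nil; split => //; ring.
move=> [qi [Ha HR]] Hd.
have [Hqi [Q [HQ HS]]] := IH qi HR (fun i => Hd i.+1).
split.
  have := Hd 0%N; rewrite /= Ha => H; nia.
exists (qi + Q); split; first lia.
rewrite big_cons HS Ha; ring.
Qed.

Lemma RelQ qp e : Rel qp e ->
  exists Q, \sum_(a <- e) a = d%:Z * qp + (d%:Z - n%:Z) * Q.
Proof.
elim: e qp => [|a e IH] qp /=.
  by move=> ->; exists 0; rewrite big_nil; ring.
move=> [qi [Ha HR]].
have [Q HS] := IH qi HR.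
exists (qi + Q); rewrite big_cons HS Ha; ring.
Qed.
End Key.

Section Rat.
Variables (n d : nat) (r : rat).
Hypotheses (n0 : (0 < n)%N) (d0 : (0 < d)%N) (cnd : coprime n d)
  (hrd : r * d%:R = n%:R).

Definition T (e : seq int) : rat := foldr (fun a acc => a%:~R + r * acc) 0 e.
Definition E (s : seq nat) : rat := \sum_(i <- s) r ^+ i.
Definition cnt M s t : seq int :=
  [seq (count_mem i s)%:Z - (count_mem i t)%:Z | i <- iota 0 M].

Lemma Tz_T e : (Tz n d e)%:~R = T e * (d%:R) ^+ (size e).
Proof.
elim: e => [|a e IH] /=; first by rewrite mul0r.
rewrite rmorphD rmorphM /= rmorphXn rmorphM /= IH /=.
rewrite -!pmulrn -hrd !exprS; ring.
Qed.

Lemma T_iota g a M : T [seq g i | i <- iota a M] = \sum_(i < M) (g (a + i)%N)%:~R * r ^+ i.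
Proof.
elim: M a => [|M IH] a /=; first by rewrite big_ord0.
rewrite big_ord_recl /= addn0 expr0 mulr1 IH mulr_sumr; congr (_ + _).
apply: eq_bigr => i _; rewrite /bump /= add1n addnS -addSn exprS; ring.
Qed.

Lemma T_cnt M s t : all (fun x => x < M)%N s -> all (fun x => x < M)%N t ->
  T (cnt M s t) = E s - E t.
Proof.
move=> Hs Ht; rewrite /cnt T_iota /E -(sum_count _ Hs) -(sum_count _ Ht) -sumrB.
apply: eq_bigr => i _; rewrite add0n rmorphB /= -!pmulrn mulrBl //.
Qed.

Lemma sum_cnt M s t : all (fun x => x < M)%N s -> all (fun x => x < M)%N t ->
  \sum_(a <- cnt M s t) a = (size s)%:Z - (size t)%:Z.
Proof.
move=> Hs Ht; rewrite /cnt big_map.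
have -> : iota 0 M = index_iota 0 M by rewrite /index_iota subn0.
rewrite big_mkord.
have := sum_count (fun _ => (1 : int)) Hs; have := sum_count (fun _ => (1 : int)) Ht.
rewrite !big_const_seq !count_predT !iter_addr_0 !natz => <- <-.
rewrite -sumrB; apply: eq_bigr => i _; rewrite !mulr1 !natz //.
Qed.

Lemma nth_cnt M s t i (P : int -> Prop) : P 0 ->
  ((i < M)%N -> P ((count_mem i s)%:Z - (count_mem i t)%:Z)) -> P (nth 0 (cnt M s t) i).
Proof.
move=> P0 H; case: (ltnP i M) => Hi.
  by rewrite /cnt (nth_map 0%N) ?size_iota // nth_iota // add0n; apply: H.
by rewrite nth_default // size_map size_iota.
Qed.

Lemma diffQ s t : n != d -> E s = E t -> exists Q : int,
  (size s)%:Z - (size t)%:Z = (d%:Z - n%:Z) * Q /\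
  ((forall i, (count_mem i s < n)%N) -> 0 <= Q) /\
  ((forall i, (count_mem i s < d)%N) -> Q <= 0).
Proof.
move=> Hnd Hst.
pose M := (sumn s + sumn t).+1.
have Hs : all (fun x => x < M)%N s by apply/allP => x /mem_sumn; rewrite /M; lia.
have Ht : all (fun x => x < M)%N t by apply/allP => x /mem_sumn; rewrite /M; lia.
pose e := cnt M s t.
have HR : Rel n d 0 e.
  apply: (key n0 d0 cnd); rewrite mul0r; apply/eqP; rewrite -(intr_eq0 rat) Tz_T /e T_cnt // Hst subrr mul0r //.
have Hsum := sum_cnt Hs Ht.
have [Q HQ] := RelQ HR; rewrite Hsum mulr0 add0r in HQ.
have Hdn : (d%:Z - n%:Z) != 0 by rewrite subr_eq0 eq_sym eqz_nat.
exists Q; split => //; split.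
  move=> Hc.
  have Hb : forall i, nth 0 e i < n%:Z.
    move=> i; apply: (@nth_cnt M s t i (fun x => x < n%:Z)); first lia.
    by move=> _; have := Hc i; lia.
  have [Q' [HQ' HS']] := RelQ_pos n0 d0 cnd HR (lexx 0) Hb.
  rewrite Hsum mulr0 add0r HQ in HS'; by rewrite (mulfI Hdn HS').
move=> Hc.
have Hb : forall i, nth 0 e i < d%:Z.
  move=> i; apply: (@nth_cnt M s t i (fun x => x < d%:Z)); first lia.
  by move=> _; have := Hc i; lia.
have [_ [Q' [HQ' HS']]] := RelQ_neg n0 d0 cnd HR Hb.
rewrite Hsum mulr0 add0r HQ in HS'; by rewrite (mulfI Hdn HS').
Qed.
End Rat.



Definition UE (r : rat) (k l : nat) := (0 < l)%N /\
  exists s t : seq nat, [/\ size s = k, size t = l & E r s = E r t].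

Lemma E_cat r s t : E r (s ++ t) = E r s + E r t.
Proof. by rewrite /E big_cat. Qed.

Lemma E_nseq r m i : E r (nseq m i) = m%:R * r ^+ i.
Proof. by rewrite /E big_nseq iter_addr_0 mulr_natl. Qed.

Lemma E_shift r s : E r (map S s) = r * E r s.
Proof. by rewrite /E big_map mulr_sumr; apply: eq_bigr => i _; rewrite exprS. Qed.

Lemma extract (i m : nat) t : (m <= count_mem i t)%N ->
  exists rest, perm_eq t (nseq m i ++ rest).
Proof.
elim: m => [|m IH] Hm; first by exists t.
have [rest Hr] := IH (ltnW Hm).
have Hc := (permP Hr) (pred1 i).
rewrite count_cat count_nseq /= eqxx mul1n in Hc.
have Hin : i \in rest.
  rewrite -has_pred1 has_count; move: Hc Hm; rewrite /= => ->; rewrite -{1}(addn0 m) ltn_add2l //.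
exists (rem i rest).
apply: (perm_trans Hr).
rewrite (perm_trans (_ : perm_eq _ (nseq m i ++ [:: i] ++ rem i rest))) //.
  by rewrite perm_cat2l /=; apply: perm_to_rem.
by rewrite perm_catCA.
Qed.

Lemma UE_inv r k l : 0 < r -> UE r k l -> UE r^-1 k l.
Proof.
move=> r0 [l0 [s [t [Hs Ht Hst]]]]; split => //.
pose M := (sumn s + sumn t)%N.
have HE : forall u, (forall x, x \in u -> x <= M)%N ->
    E r^-1 (map (fun i => M - i)%N u) = E r u / r ^+ M.
  move=> u Hu; rewrite /E big_map mulr_suml big_seq_cond [RHS]big_seq_cond.
  apply: eq_bigr => i /andP [Hi _].
  have HiM := Hu i Hi.
  rewrite exprVn -(subnK HiM) exprD invfM (addnK i) mulrC mulfVK //.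
  by rewrite expf_neq0 // gt_eqF.
exists (map (fun i => M - i)%N s), (map (fun i => M - i)%N t); split; rewrite ?size_map //.
rewrite !HE ?Hst // => x /mem_sumn; rewrite /M; lia.
Qed.

Lemma maxP (P : nat -> Prop) k : P 1%N -> (forall m, P m -> (m < k)%N) ->
  exists M, P M /\ forall m, P m -> (m <= M)%N.
Proof.
move=> P1 Hb.
suff : forall N m0, P m0 -> (forall m, P m -> (m < m0 + N)%N) ->
   exists M, P M /\ forall m, P m -> (m <= M)%N.
  by move=> H; apply: (H k 1%N P1) => m /Hb; lia.
elim=> [|N IH] m0 Pm0 Hm0.
  by have := Hm0 _ Pm0; lia.
have [[m [Pm Hm]]|Hn] := Classical_Prop.classic (exists m, P m /\ (m0 < m)%N).
  by apply: (IH m Pm) => m' /Hm0; lia.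
exists m0; split => // m Pm; case: (leqP m m0) => // Hlt.
by exfalso; apply: Hn; exists m.
Qed.

Section Small.
Variables (n d : nat) (r : rat).
Hypotheses (n2 : (2 <= n)%N) (nd : (n < d)%N) (cnd : coprime n d)
  (hrd : r * d%:R = n%:R) (r0 : 0 < r).

Let n0 : (0 < n)%N. Proof. lia. Qed.
Let d0 : (0 < d)%N. Proof. lia. Qed.
Let ndne : n != d. Proof. lia. Qed.

Lemma cong k l : UE r k l -> exists Q : int,
  k%:Z - l%:Z = (d%:Z - n%:Z) * Q /\ ((k < n)%N -> 0 <= Q) /\ ((k < d)%N -> Q <= 0).
Proof.
move=> [l0 [s [t [Hs Ht Hst]]]].
have [Q [HQ [H1 H2]]] := diffQ n0 d0 cnd hrd ndne Hst.
exists Q; rewrite -Hs -Ht; split => //; split => Hk.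
  by apply: H1 => i; exact: leq_ltn_trans (count_size _ _) Hk.
by apply: H2 => i; exact: leq_ltn_trans (count_size _ _) Hk.
Qed.

Fixpoint B j := if j is j'.+1 then nseq (d - n) 1%N ++ map S (B j') else nseq n 0%N.

Lemma B_E j : E r (B j) = n%:R.
Proof.
elim: j => [|j IH] /=; first by rewrite E_nseq expr0 mulr1.
rewrite E_cat E_nseq E_shift IH expr1 natrB; last by lia.
rewrite -[RHS]hrd; ring.
Qed.

Lemma B_size j : size (B j) = (n + j * (d - n))%N.
Proof. elim: j => [|j IH] /=; first by rewrite size_nseq; lia. rewrite size_cat size_nseq size_map IH; lia. Qed.

Lemma up k j : (n <= k)%N -> UE r k (k + j * (d - n)).
Proof.
move=> Hk; split; first by apply: leq_trans (leq_addr _ _); lia.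
exists (nseq k 0%N), (nseq (k - n) 0%N ++ B j); split.
- by rewrite size_nseq.
- rewrite size_cat size_nseq B_size; lia.
rewrite E_cat !E_nseq B_E !expr0 !mulr1 -natrD subnK //.
Qed.

Lemma down k : (d <= k)%N -> UE r k (k - (d - n)).
Proof.
move=> Hk; split; first lia.
exists (nseq k 1%N), (nseq (k - d) 1%N ++ nseq n 0%N); split.
- by rewrite size_nseq.
- rewrite size_cat !size_nseq; lia.
rewrite E_cat !E_nseq expr0 expr1 mulr1 -hrd natrB //.
ring.
Qed.

Lemma step k l : UE r k l -> (l < k)%N -> UE r k (l + (d - n)).
Proof.
move=> [l0 [s [t [Hs Ht Hst]]]] Hlk.
have [Q [HQ [H1 _]]] := diffQ n0 d0 cnd hrd ndne (esym Hst).
have [i Hi] : exists i, (n <= count_mem i t)%N.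
  case: (boolP (has (fun i => n <= count_mem i t)%N t)) => [/hasP [i _ Hi]|Hn].
    by exists i.
  exfalso.
  have : 0 <= Q.
    apply: H1 => i; case: (boolP (i \in t)) => Hit.
      by move/hasPn: Hn => /(_ i Hit); rewrite -ltnNge.
    by move/count_memPn: Hit => ->.
  move: HQ; rewrite Hs Ht; nia.
have [rest Hp] := extract Hi.
split; first lia.
exists s, (rest ++ nseq d i.+1); split => //.
  have := perm_size Hp; rewrite !size_cat !size_nseq Ht => ->; rewrite addnAC subnKC ?(ltnW nd) // addnC //.
rewrite Hst /E (perm_big _ Hp) -!/(E r _) !E_cat !E_nseq exprS mulrA -hrd.
ring.
Qed.

Lemma UE_refl k : (0 < k)%N -> UE r k k.
Proof. by move=> k0; split => //; exists (nseq k 0%N), (nseq k 0%N); rewrite size_nseq. Qed.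

Lemma S1 k : (0 < k)%N -> (k < n)%N -> forall l, UE r k l <-> l = k.
Proof.
move=> k0 kn l; split; last by move=> ->; apply: UE_refl.
move=> /cong [Q [HQ [H1 H2]]].
have Q0 : Q = 0 by have := H1 kn; have := H2 (ltn_trans kn nd); lia.
by move: HQ; rewrite Q0 mulr0; lia.
Qed.

Lemma S2 k : (n <= k)%N -> (k < d)%N -> forall l,
  UE r k l <-> exists j : nat, l%:Z = k%:Z + j%:Z * (d%:Z - n%:Z).
Proof.
move=> kn kd l; split.
  move=> /cong [Q [HQ [_ H2]]]; have := H2 kd => Hq.
  exists `|Q|%N; lia.
move=> [j Hj]; have -> : l = (k + j * (d - n))%N by lia.
exact: up.
Qed.

Lemma S3 k : (d <= k)%N -> exists ell : int, ell < 0 /\ forall l,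
  UE r k l <-> exists j : int, ell <= j /\ l%:Z = k%:Z + j * (d%:Z - n%:Z).
Proof.
move=> kd.
pose D := (d - n)%N.
have D0 : (0 < D)%N by rewrite /D; lia.
have DZ : d%:Z - n%:Z = D%:Z by rewrite /D; lia.
pose P m := (m * D < k)%N /\ UE r k (k - m * D).
have P1 : P 1%N by split; [rewrite /D; lia | rewrite mul1n; exact: down].
have Pb : forall m, P m -> (m < k)%N by move=> m [Hm _]; nia.
have [M [PM HM]] := maxP P1 Pb.
have Pcl : forall m, P m.+1 -> P m.
  move=> m [Hm HU]; split; first by nia.
  have := step HU; rewrite -/D.
  have -> : (k - m.+1 * D + D = k - m * D)%N by nia.
  by apply; nia.
have Pdown : forall m a, P (m + a)%N -> P m.
  by move=> m; elim=> [|a IH]; rewrite ?addn0 // addnS => /Pcl.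
have M1 : (1 <= M)%N by apply: HM.
exists (- M%:Z); split; first lia.
move=> l; rewrite DZ; split.
  move=> HU; have [Q [HQ _]] := cong HU; rewrite DZ in HQ.
  case: (lerP Q 0) => HQ0.
    exists (- Q); split; first lia.
    nia.
  have HP : P `|Q|%N.
    have [l0 _] := HU.
    have Hk : (k = l + `|Q|%N * D)%N by nia.
    split; first by nia.
    by have -> : (k - `|Q|%N * D = l)%N by nia.
  have := HM _ HP => HQM.
  exists (- Q); split; nia.
move=> [j [Hj Hl]].
case: (lerP 0 j) => Hj0.
  have -> : l = (k + `|j|%N * (d - n))%N by nia.
  by apply: up; lia.
have Hm : (`|j|%N <= M)%N by lia.
have [_ HU] : P `|j|%N by apply: (Pdown _ (M - `|j|)%N); rewrite subnKC.
by have -> : l = (k - `|j|%N * D)%N by nia.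
Qed.
End Small.



Lemma E_ge0 r s : 0 < r -> 0 <= E r s.
Proof. by move=> r0; apply: sumr_ge0 => i _; apply: exprn_ge0; apply: ltW. Qed.

Lemma E_eq0 r s : 0 < r -> E r s = 0 -> s = [::].
Proof.
move=> r0; case: s => // x s; rewrite /E big_cons -/(E r s) => H.
have := E_ge0 s r0; have : 0 < r ^+ x by apply: exprn_gt0.
move=> Hx Hs0; have := ltr_wpDr Hs0 Hx; rewrite H ltxx //.
Qed.

Lemma E1 r i : E r [:: i] = r ^+ i.
Proof. by rewrite /E big_seq1. Qed.

Lemma atom_pow r a : 0 < r -> atom_Sr r a -> exists i, a = r ^+ i.
Proof.
move=> r0 [[s Hs] Ha0 Hsplit]; case: s Hs => [|x s] Hs.
  by move: Ha0; rewrite Hs /E big_nil eqxx.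
exists x.
have Hab : a = r ^+ x + E r s by rewrite Hs big_cons.
have [Hb|Hc] := Hsplit (r ^+ x) (E r s) (ex_intro _ [:: x] (esym (E1 r x))) (ex_intro _ s erefl) Hab.
  by move/eqP: Hb; rewrite expf_eq0 gt_eqF // andbF.
by rewrite Hab Hc addr0.
Qed.

Lemma atoms_map r (l : seq rat) : 0 < r -> (forall a, a \in l -> atom_Sr r a) ->
  exists s, l = map (fun i => r ^+ i) s.
Proof.
move=> r0; elim: l => [|a l IH] H; first by exists [::].
have [i ->] := atom_pow r0 (H a (mem_head _ _)).
have [s ->] := IH (fun b Hb => H b (@mem_behead _ (a :: l) b Hb)).
by exists (i :: s).
Qed.

Section Gen.
Variables (n d : nat) (r : rat).
Hypotheses (n2 : (2 <= n)%N) (d2 : (2 <= d)%N) (ndne : n != d) (cnd : coprime n d)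
  (hrd : r * d%:R = n%:R) (r0 : 0 < r).

Lemma pow_atom i : atom_Sr r (r ^+ i).
Proof.
split.
- by exists [:: i]; rewrite big_seq1.
- by rewrite expf_eq0 gt_eqF // andbF.
move=> b c [s Hs] [t Ht] Hbc.
case: (eqVneq b 0) => Hb; first by left.
case: (eqVneq c 0) => Hc; first by right.
exfalso.
have Hst : E r [:: i] = E r (s ++ t) by rewrite E_cat E1 Hbc Hs Ht.
have [Q [HQ [H1 H2]]] := diffQ (ltnW n2) (ltnW d2) cnd hrd ndne Hst.
have Hc1 : forall m, (count_mem m [:: i] <= 1)%N by move=> m /=; case: (i == m).
have HQ1 := H1 (fun m => leq_ltn_trans (Hc1 m) n2).
have HQ2 := H2 (fun m => leq_ltn_trans (Hc1 m) d2).
have Q0 : Q = 0 by lia.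
move: HQ; rewrite Q0 mulr0 size_cat /=; clear -Hs Ht Hb Hc.
case: s Hs => [|x s] Hs; first by move: Hb; rewrite Hs big_nil eqxx.
case: t Ht => [|y t] Ht; first by move: Hc; rewrite Ht big_nil eqxx.
rewrite /=; lia.
Qed.

Lemma U_UE k l : U_Sr r k l <-> UE r k l.
Proof.
split.
  move=> [l0 [as_ [bs [Ha Hb Hata Hatb Hsum]]]]; split => //.
  have [s Hs] := atoms_map r0 Hata; have [t Ht] := atoms_map r0 Hatb.
  exists s, t; split.
  - by rewrite -Ha Hs size_map.
  - by rewrite -Hb Ht size_map.
  by move: Hsum; rewrite Hs Ht !big_map.
move=> [l0 [s [t [Hs Ht Hst]]]]; split => //.
exists (map (fun i => r ^+ i) s), (map (fun i => r ^+ i) t); split.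
- by rewrite size_map.
- by rewrite size_map.
- by move=> a /mapP [i _ ->]; apply: pow_atom.
- by move=> a /mapP [i _ ->]; apply: pow_atom.
by rewrite !big_map.
Qed.
End Gen.



Lemma E_nat (m : nat) s : E m%:R s = (sumn [seq (m ^ i)%N | i <- s])%:R.
Proof.
elim: s => [|x s IH]; first by rewrite /E big_nil.
by rewrite /E big_cons -/(E _ s) IH /= natrD natrX.
Qed.

Lemma sum_ones (s : seq rat) : (forall a, a \in s -> a = 1) -> \sum_(a <- s) a = (size s)%:R.
Proof.
elim: s => [|a s IH] H; first by rewrite big_nil.
rewrite big_cons IH ?(H a (mem_head _ _)) /=; first by rewrite -natr1 addrC.
by move=> b Hb; apply: H; rewrite in_cons Hb orbT.
Qed.

Lemma int_case (m : nat) r k l : (0 < m)%N -> r = m%:R -> (0 < k)%N ->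
  U_Sr r k l <-> l = k.
Proof.
move=> m0 -> k0.
have atom1 : forall a, atom_Sr m%:R a -> a = 1.
  move=> a [[s Hs] Ha0 Hsplit].
  have {Hs} Hs : a = (sumn [seq (m ^ i)%N | i <- s])%:R by rewrite -E_nat.
  move: Hs Ha0 Hsplit; set N := sumn _ => Hs Ha0 Hsplit.
  have N0 : (0 < N)%N by move: Ha0; rewrite Hs pnatr_eq0 lt0n.
  case: (leqP N 1) => HN; first by rewrite Hs; have -> : N = 1%N by lia.
  have Hab : a = 1 + (N.-1)%:R by rewrite Hs -{1}(prednK N0) -natr1 addrC.
  have HN1 : in_Sr m%:R (N.-1)%:R by exists (nseq N.-1 0%N); rewrite -/(E _ _) E_nseq expr0 mulr1.
  have H1 : in_Sr m%:R 1 by exists [:: 0%N]; rewrite big_seq1 expr0.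
  have [H|H] := Hsplit 1 (N.-1)%:R H1 HN1 Hab.
    by move/eqP: H; rewrite oner_eq0.
  by move/eqP: H; rewrite pnatr_eq0; lia.
have one_atom : atom_Sr m%:R 1.
  split; first by exists [:: 0%N]; rewrite big_seq1 expr0.
    by rewrite oner_eq0.
  move=> b c [s Hs] [t Ht]; rewrite Hs Ht -/(E _ s) -/(E _ t) !E_nat -natrD.
  move/eqP; rewrite eq_sym pnatr_eq1 => /eqP H.
  have [->|->] : sumn [seq (m ^ i)%N | i <- s] = 0%N \/ sumn [seq (m ^ i)%N | i <- t] = 0%N by lia.
  by left. by right.
split.
  move=> [l0 [as_ [bs [Ha Hb Hata Hatb Hsum]]]].
  have Ha1 : forall a, a \in as_ -> a = 1 by move=> a Hm; apply: atom1; exact: Hata.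
  have Hb1 : forall a, a \in bs -> a = 1 by move=> a Hm; apply: atom1; exact: Hatb.
  by move: Hsum; rewrite (sum_ones Ha1) (sum_ones Hb1) Ha Hb => /eqP; rewrite eqr_nat => /eqP.
move=> ->; split => //; exists (nseq k 1), (nseq k 1); split; rewrite ?size_nseq //.
- by move=> a; rewrite mem_nseq => /andP [_ /eqP ->].
- by move=> a; rewrite mem_nseq => /andP [_ /eqP ->].
Qed.

Lemma no_atomic (dd : nat) r : 0 < r -> (2 <= dd)%N -> r * dd%:R = 1 -> ~ atomic_Sr r.
Proof.
move=> r0 d2 hrd Hat.
have H1 : in_Sr r 1 by exists [:: 0%N]; rewrite big_seq1 expr0.
have [s [Hs Hsum]] := Hat 1 H1 (oner_neq0 _).
case: s Hs Hsum => [|a s] Hs Hsum; first by move/eqP: Hsum; rewrite big_nil oner_eq0.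
have Ha := Hs a (mem_head _ _).
have [i Hai] := atom_pow r0 Ha.
case: Ha => _ _ Hsplit.
have Hab : a = r ^+ i.+1 + (dd.-1)%:R * r ^+ i.+1.
  rewrite Hai -[X in X + _]mul1r -mulrDl addrC natr1 prednK; last lia.
  by rewrite exprS mulrA [dd%:R * r]mulrC hrd mul1r.
have Hb : in_Sr r (r ^+ i.+1) by exists [:: i.+1]; rewrite big_seq1.
have Hc : in_Sr r ((dd.-1)%:R * r ^+ i.+1) by exists (nseq dd.-1 i.+1); rewrite -/(E _ _) E_nseq.
have [H|H] := Hsplit _ _ Hb Hc Hab.
  by move/eqP: H; rewrite expf_eq0 gt_eqF // andbF.
move/eqP: H; rewrite mulf_eq0 expf_eq0 (gt_eqF r0) andbF orbF pnatr_eq0; lia.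
Qed.

Unset Implicit Arguments.


Theorem proposition4p9 (r : rat) (hr : 0 < r) (hatomic : atomic_Sr r) :
  let n := numq r in let d := denq r in
  (* (1) r < 1 *)
  (r < 1 ->
   forall k : nat, (0 < k)%N ->
     [/\ (k%:Z < n -> forall l : nat, U_Sr r k l <-> l = k),
         (n <= k%:Z < d ->
            forall l : nat, U_Sr r k l <->
              exists j : nat, l%:Z = k%:Z + j%:Z * (d - n)) &
         (d <= k%:Z ->
            exists ell : int, ell < 0 /\
              forall l : nat, U_Sr r k l <->
                exists j : int, ell <= j /\ l%:Z = k%:Z + j * (d - n))])
  /\
  (* (2) r > 1, r not an integer *)
  (1 < r -> d != 1 ->
   forall k : nat, (0 < k)%N ->
     [/\ (k%:Z < d -> forall l : nat, U_Sr r k l <-> l = k),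
         (d <= k%:Z < n ->
            forall l : nat, U_Sr r k l <->
              exists j : nat, l%:Z = k%:Z + j%:Z * (n - d)) &
         (n <= k%:Z ->
            exists ell : int, ell < 0 /\
              forall l : nat, U_Sr r k l <->
                exists j : int, ell <= j /\ l%:Z = k%:Z + j * (n - d))])
  /\
  (* (3) r a positive integer *)
  (d = 1 ->
   forall k : nat, (0 < k)%N -> forall l : nat, U_Sr r k l <-> l = k).
Proof.
move=> n d; rewrite {}/n {}/d.
pose nn := `|numq r|%N; pose dd := `|denq r|%N.
have Hn : numq r = nn%:Z by rewrite /nn abszE gtr0_norm // numq_gt0.
have Hd : denq r = dd%:Z by rewrite /dd abszE gtr0_norm // denq_gt0.
have n0 : (0 < nn)%N by have := numq_gt0 r; rewrite hr Hn; lia.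
have d0 : (0 < dd)%N by have := denq_gt0 r; rewrite Hd; lia.
have hrd : r * dd%:R = nn%:R by have := numqE r; rewrite Hn Hd -!pmulrn => ->.
have cnd : coprime nn dd by have := coprime_num_den r.
rewrite Hn Hd.
split; [|split].
- move=> r1 k k0.
  have nd : (nn < dd)%N.
    have : (nn%:R : rat) < dd%:R.
      by rewrite -hrd -[X in _ < X]mul1r ltr_pM2r // ltr0n.
    by rewrite ltr_nat.
  have n2 : (2 <= nn)%N.
    case: (leqP 2 nn) => // Hn1; exfalso.
    have nn1 : nn = 1%N by lia.
    rewrite nn1 in hrd; apply: (no_atomic hr _ hrd hatomic); lia.
  have HU : forall l, U_Sr r k l <-> UE r k l.
    move=> l; apply: (U_UE n2 _ _ cnd hrd hr); lia.
  split.
  + move=> Hk l; rewrite HU; apply: (S1 n2 nd cnd hrd hr) => //; lia.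
  + move=> /andP [H1 H2] l; rewrite HU; apply: (S2 n2 nd cnd hrd hr); lia.
  + move=> H; have [ell [Hl HH]] := S3 n2 nd cnd hrd hr (k:=k) ltac:(lia).
    by exists ell; split => // l; rewrite HU; exact: HH.
- move=> r1 dne k k0.
  have d2 : (2 <= dd)%N by move: dne; rewrite eqz_nat; lia.
  have nd : (dd < nn)%N.
    have : (dd%:R : rat) < nn%:R.
      by rewrite -hrd -[X in X < _]mul1r ltr_pM2r // ltr0n.
    by rewrite ltr_nat.
  have hr' : 0 < r^-1 by rewrite invr_gt0.
  have hrd' : r^-1 * nn%:R = dd%:R by rewrite -hrd mulrA mulVf ?mul1r // gt_eqF.
  have cnd' : coprime dd nn by rewrite coprime_sym.
  have HU : forall l, U_Sr r k l <-> UE r^-1 k l.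
    move=> l; rewrite (U_UE (ltnW (leq_ltn_trans d2 nd)) d2 _ cnd hrd hr); last by lia.
    split; first exact: UE_inv.
    by move=> /(UE_inv hr'); rewrite invrK.
  split.
  + move=> Hk l; rewrite HU; apply: (S1 d2 nd cnd' hrd' hr') => //; lia.
  + move=> /andP [H1 H2] l; rewrite HU; apply: (S2 d2 nd cnd' hrd' hr'); lia.
  + move=> H; have [ell [Hl HH]] := S3 d2 nd cnd' hrd' hr' (k:=k) ltac:(lia).
    by exists ell; split => // l; rewrite HU; exact: HH.
- move=> d1 k k0 l.
  have dd1 : dd = 1%N by lia.
  rewrite dd1 mulr1 in hrd.
  exact: int_case n0 hrd k0.
Qed.
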